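(* Let $n\ge t+1$, $t\ge1$ and $s\ge2$. Then, as ideals of $S=K[x_1,\ldots,x_n]$, $$\bigl(I_t(L_{n-1})^s:u_{n-t+1}\bigr)+(x_{n-t})=\bigl(I_t(L_{n-t-1})^s,\,x_{n-t}\bigr).$$ In particular, if $n\le 2t$ then $I_t(L_{n-t-1})=0$ and the left-hand side equals $(x_{n-t})$.
   Context: $K$ is a field. For $1\le m\le n$ and $m\ge t$, $I_t(L_m)$ denotes the ideal of $S$ generated by $u_i=x_ix_{i+1}\cdots x_{i+t-1}$ for $i=1,\ldots,m-t+1$ (the $t$-path ideal of the line graph on $x_1,\ldots,x_m$); by convention $I_t(L_m)=0$ if $m<t$. Here $u_{n-t+1}=x_{n-t+1}\cdots x_n$. *)

(* Defs.v *)
From HB Require Import structures.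
From mathcomp Require Import all_boot all_algebra.
From mathcomp Require Import mpoly.
Set Implicit Arguments. Unset Strict Implicit. Unset Printing Implicit Defensive.
Import GRing.Theory.
Local Open Scope ring_scope.

Section Ideals.
Variable P : comNzRingType.

Definition ideal_gen (A : P -> Prop) : P -> Prop :=
  fun f => exists l : seq (P * P),
    (forall p, p \in l -> A p.2) /\ f = \sum_(p <- l) p.1 * p.2.

Definition ideal_sum (I J : P -> Prop) : P -> Prop :=
  ideal_gen (fun f => I f \/ J f).

Definition ideal_mul (I J : P -> Prop) : P -> Prop :=
  ideal_gen (fun f => exists a b, [/\ I a, J b & f = a * b]).

Fixpoint ideal_pow (I : P -> Prop) (s : nat) : P -> Prop :=
  match s with
  | 0 => ideal_gen (fun f => f = 1)
  | s'.+1 => ideal_mul (ideal_pow I s') I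
  end.

Definition ideal_colon (I : P -> Prop) (u : P) : P -> Prop :=
  fun f => I (f * u).

Definition ideal_princ (g : P) : P -> Prop := ideal_gen (fun f => f = g).

Definition ideal_eq (I J : P -> Prop) : Prop := forall f, I f <-> J f.
End Ideals.

Section PathIdeal.
Variables (K : fieldType) (n : nat).

(* the variable x_j of S = K[x_1,...,x_n] (1 <= j <= n); 0 outside that range *)
Definition xv (j : nat) : {mpoly K[n]} :=
  match @insub nat (fun k => (k < n)%N) _ j.-1 with
  | Some i => 'X_(i : 'I_n)
  | None => 0
  end.

Definition upath (t i : nat) : {mpoly K[n]} :=
  \prod_(i <= j < (i + t)%N) xv j.

(* I_t(L_m): generated by u_i, i = 1..m-t+1; no generators (zero ideal) if m < t *)
Definition pathI (t m : nat) : {mpoly K[n]} -> Prop :=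
  ideal_gen (fun f => exists2 i, (1 <= i <= m.+1 - t)%N & f = upath t i).
End PathIdeal.

(* Main.v *)
Require Import Defs.
From HB Require Import structures.
From mathcomp Require Import all_boot all_algebra.
From mathcomp Require Import mpoly.
Local Open Scope ring_scope.
Import GRing.Theory.

Section Gen.
Variable P : comNzRingType.
Implicit Types (A B I J : P -> Prop).

Lemma gen0 A : ideal_gen A 0.
Proof. by exists [::]; rewrite big_nil. Qed.

Lemma genD A f g : ideal_gen A f -> ideal_gen A g -> ideal_gen A (f + g).
Proof.
move=> [l1 [H1 ->]] [l2 [H2 ->]]; exists (l1 ++ l2); split; last by rewrite big_cat.
by move=> p; rewrite mem_cat => /orP [/H1|/H2].
Qed.

Lemma genM A c f : ideal_gen A f -> ideal_gen A (c * f).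
Proof.
move=> [l [H ->]]; exists [seq (c * p.1, p.2) | p <- l]; split.
  by move=> p /mapP [q /H Hq ->].
by rewrite big_map mulr_sumr; apply: eq_bigr => p _; rewrite mulrA.
Qed.

Lemma genI A a : A a -> ideal_gen A a.
Proof. by move=> Ha; exists [:: (1, a)]; split; [move=> p; rewrite inE => /eqP -> | rewrite big_seq1 mul1r]. Qed.

Lemma gen_big A (T : eqType) (r : seq T) (F : T -> P) :
  (forall x, x \in r -> ideal_gen A (F x)) -> ideal_gen A (\sum_(x <- r) F x).
Proof.
elim: r => [|x r IH] H; first by rewrite big_nil; apply: gen0.
rewrite big_cons; apply: genD; first by apply: H; rewrite inE eqxx.
by apply: IH => y Hy; apply: H; rewrite inE Hy orbT.
Qed.

Lemma gen_sub A B f : (forall a, A a -> ideal_gen B a) -> ideal_gen A f -> ideal_gen B f.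
Proof.
move=> H [l [Hl ->]]; apply: gen_big => p /Hl Hp; apply: genM; exact: H.
Qed.

Lemma powM I s c f : ideal_pow I s f -> ideal_pow I s (c * f).
Proof. by case: s => [|s] /=; apply: genM. Qed.

Lemma pow_mono I J s f : (forall g, I g -> J g) -> ideal_pow I s f -> ideal_pow J s f.
Proof.
move=> HIJ; elim: s f => [|s IH] f //=.
apply: gen_sub => _ [a [b [Ha Hb ->]]]; apply: genI; exists a, b; split => //.
  exact: IH. exact: HIJ.
Qed.

Lemma pow0_all I f : ideal_pow I 0 f.
Proof. by exists [:: (f, 1)]; split; [move=> p; rewrite inE => /eqP -> | rewrite big_seq1 mulr1]. Qed.

Lemma F_sum (F : P -> P) (T : Type) (r : seq T) (G : T -> P) :
  F 0 = 0 -> (forall x y, F (x + y) = F x + F y) ->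
  F (\sum_(x <- r) G x) = \sum_(x <- r) F (G x).
Proof.
move=> F0 FD; elim: r => [|x r IH]; first by rewrite !big_nil.
by rewrite !big_cons FD IH.
Qed.

Lemma pow_F (F : P -> P) A A' :
  F 0 = 0 -> (forall x y, F (x + y) = F x + F y) ->
  (forall g, A g -> (ideal_gen A' g /\ forall c, F (c * g) = F c * g)
                     \/ (forall c, F (c * g) = 0)) ->
  forall s f, ideal_pow (ideal_gen A) s f -> ideal_pow (ideal_gen A') s (F f).
Proof.
move=> F0 FD HA; elim=> [|s IH] f /=; first by move=> _; apply: pow0_all.
move=> [l [Hl ->]]; rewrite (F_sum _ _ _ _ F0 FD); apply: gen_big => p /Hl [a [b [Ha [lb [Hlb Eb]]] Ep]].
rewrite Ep Eb mulr_sumr mulr_sumr (F_sum _ _ _ _ F0 FD); apply: gen_big => q /Hlb Aq.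
rewrite mulrA mulrA.
case: (HA _ Aq) => [[Gq Cq]|Kq]; last by rewrite Kq; apply: gen0.
rewrite Cq -[_ * q.2]mul1r; apply: genM; apply: genI.
exists (F (p.1 * a * q.1)), q.2; split => //.
apply: IH; rewrite [_ * q.1]mulrC; apply: powM; exact: powM.
Qed.

End Gen.
Section Ops.
Variables (K : fieldType) (n : nat).
Local Notation S := {mpoly K[n]}.

Definition Op (g : 'X_{1..n} -> S) (p : S) : S := \sum_(m <- msupp p) p@_m *: g m.

Lemma Op_coef g p k : (Op g p)@_k = \sum_(m <- msupp p) p@_m * (g m)@_k.
Proof. by rewrite /Op raddf_sum /=; apply: eq_bigr => m _; apply: mcoeffZ. Qed.

Lemma sum_ind (p : S) k : \sum_(m <- msupp p) p@_m * (m == k)%:R = p@_k.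
Proof.
rewrite [in RHS](mpolyE p) raddf_sum /=; apply: eq_bigr => m _.
by rewrite mcoeffZ mcoeffX.
Qed.

Lemma coefMX (p : S) w m : (p * 'X_[w])@_m = if lem w m then p@_(m - w) else 0.
Proof.
case: ifP => Hw.
  by rewrite -{1}(submK Hw) addmC mcoeffMX.
rewrite {1}(mpolyE p) mulr_suml raddf_sum /= big1 // => k _.
rewrite -scalerAl -mpolyXD mcoeffZ mcoeffX.
case: eqP => [E|]; last by rewrite mulr0.
by move: Hw; rewrite -E lem_addl.
Qed.

Definition Dop (um : 'X_{1..n}) := Op (fun m => if lem um m then 'X_[m - um] else 0).

Lemma Dop_coef um p k : (Dop um p)@_k = p@_(k + um).
Proof.
rewrite Op_coef -sum_ind; apply: eq_bigr => m _; congr (_ * _).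
case: ifP => H.
  rewrite mcoeffX; have -> // : ((m - um)%MM == k) = (m == (k + um)%MM).
  apply/idP/idP => /eqP E; apply/eqP.
    by rewrite -E submK.
  by rewrite E addmK.
rewrite mcoeff0; case: eqP => // E; by move: H; rewrite E lem_addl.
Qed.

Definition Phi (j : 'I_n) := Op (fun m => if m j == 0%N then 'X_[m] else 0).

Lemma Phi_coef j p k : (Phi j p)@_k = if k j == 0%N then p@_k else 0.
Proof.
rewrite Op_coef; case: ifP => Hk.
  rewrite -sum_ind; apply: eq_bigr => m _; congr (_ * _).
  case: ifP => Hm; first by rewrite mcoeffX.
  by rewrite mcoeff0; case: eqP => // E; move: Hm; rewrite E Hk.
rewrite big1 // => m _; case: ifP => Hm; last by rewrite mcoeff0 mulr0.
rewrite mcoeffX; case: eqP => [E|]; last by rewrite mulr0.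
by move: Hm; rewrite E Hk.
Qed.

Lemma Dop0 um : Dop um 0 = 0.
Proof. by apply/mpolyP => k; rewrite Dop_coef !mcoeff0. Qed.
Lemma DopD um p q : Dop um (p + q) = Dop um p + Dop um q.
Proof. by apply/mpolyP => k; rewrite mcoeffD !Dop_coef mcoeffD. Qed.
Lemma Phi0 j : Phi j 0 = 0.
Proof. by apply/mpolyP => k; rewrite Phi_coef !mcoeff0; case: ifP. Qed.
Lemma PhiD j p q : Phi j (p + q) = Phi j p + Phi j q.
Proof. by apply/mpolyP => k; rewrite mcoeffD !Phi_coef mcoeffD; case: ifP; rewrite ?addr0. Qed.

Lemma Dop_comm (um w : 'X_{1..n}) c : (forall i, (um i == 0%N) || (w i == 0%N)) ->
  Dop um (c * 'X_[w]) = Dop um c * 'X_[w].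
Proof.
move=> Hc; apply/mpolyP => k; rewrite Dop_coef !coefMX.
have E: lem w (k + um) = lem w k.
  apply/mnm_lepP/mnm_lepP => H i; have := H i; rewrite mnmDE //.
    by case/orP: (Hc i) => /eqP ->; rewrite ?addn0 // => _; rewrite leq0n.
  move=> Hi; exact: leq_trans Hi (leq_addr _ _).
rewrite E; case: ifP => // Hw; rewrite Dop_coef; congr (c@_ _).
apply/mnmP => i; rewrite !mnmDE !mnmBE mnmDE.
case/orP: (Hc i) => /eqP ->; rewrite ?addn0 ?subn0 //.
Qed.

Lemma Dop_cancel um c : Dop um (c * 'X_[um]) = c.
Proof. by apply/mpolyP => k; rewrite Dop_coef addmC mcoeffMX. Qed.

Lemma Phi_comm j (w : 'X_{1..n}) c : w j = 0%N -> Phi j (c * 'X_[w]) = Phi j c * 'X_[w].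
Proof.
move=> Hw; apply/mpolyP => k; rewrite Phi_coef !coefMX.
case: (lem w k); last by case: ifP.
by rewrite Phi_coef mnmBE Hw subn0.
Qed.

Lemma Phi_kill j (w : 'X_{1..n}) c : (0 < w j)%N -> Phi j (c * 'X_[w]) = 0.
Proof.
move=> Hw; apply/mpolyP => k; rewrite Phi_coef coefMX mcoeff0.
case: ifP => // /eqP Hk; case: ifP => // /mnm_lepP /(_ j).
by rewrite Hk leqn0 => /eqP E; move: Hw; rewrite E.
Qed.

End Ops.
Arguments Op {K n}.
Arguments Phi {K n}.
Arguments Dop {K n}.
Lemma prodE (K : fieldType) (n a d : nat) : (1 <= a)%N -> (a + d <= n.+1)%N ->
  exists w : 'X_{1..n}, \prod_(a <= j < a + d) @xv K n j = 'X_[w] /\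
    forall k : 'I_n, w k = ((a.-1 <= k) && (k < a.-1 + d))%N.
Proof.
case: a => [//|a'] _ /=; elim: d => [|d IH] Hd.
  exists 0%MM; split; first by rewrite addn0 big_geq // mpolyX0.
  by move=> k; rewrite mnm0E addn0; case: leqP => //= H; rewrite ltnNge H.
have Hd' : (a'.+1 + d <= n.+1)%N by rewrite addnS in Hd; exact: ltnW.
have [w [Ew Hw]] := IH Hd'.
have Hj : ((a'.+1 + d).-1 < n)%N by rewrite addSn /=; rewrite addnS in Hd.
exists (w + U_(Ordinal Hj))%MM; split.
  rewrite addnS big_nat_recr /=; last by rewrite leq_addr.
  rewrite Ew mpolyXD; congr (_ * _).
  by rewrite /xv (insubT (fun k => (k < n)%N) Hj).
move=> k; rewrite mnmDE Hw mnm1E.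
have -> : (Ordinal Hj == k) = (a' + d == k)%N by [].
rewrite addnS; case: (ltngtP k (a' + d)) => H; rewrite ?addn0 ?andbT ?andbF.
- by rewrite ltnS (ltnW H) andbT.
- by rewrite ltnS (leqNgt k) H andbF.
- by rewrite H leq_addr ltnS leqnn.
Qed.

From mathcomp Require Import zify.

Lemma gen_zero (P : comNzRingType) (A : P -> Prop) f :
  (forall a, A a -> a = 0) -> ideal_gen A f -> f = 0.
Proof.
move=> HA [l [Hl ->]]; rewrite big1_seq // => p /andP [_ /Hl /HA ->]; exact: mulr0.
Qed.

Lemma upathE (K : fieldType) (n t i : nat) : (1 <= i)%N -> (i + t <= n.+1)%N ->
  exists w : 'X_{1..n}, @upath K n t i = 'X_[w] /\
    forall k : 'I_n, w k = ((i.-1 <= k) && (k < i.-1 + t))%N.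
Proof. exact: prodE. Qed.

Lemma minus_Phi (K : fieldType) (n : nat) (j : 'I_n) (a : {mpoly K[n]}) :
  a - Phi j a = Dop (U_(j)%MM) (a - Phi j a) * 'X_j.
Proof.
apply/mpolyP => k; rewrite coefMX mcoeffB Phi_coef.
have E : lem (U_(j)%MM) k = (k j != 0%N).
  apply/mnm_lepP/idP => [/(_ j)|H i]; first by rewrite mnm1E eqxx lt0n.
  by rewrite mnm1E; case: eqP => [<-|]; rewrite ?lt0n.
rewrite E; case: ifP => H /=; first by rewrite subrr.
rewrite subr0 Dop_coef submK; last by rewrite E H.
by rewrite mcoeffB Phi_coef H subr0.
Qed.

Theorem lemma3p7 (K : fieldType) (n t s : nat) :
  (1 <= t)%N -> (t + 1 <= n)%N -> (2 <= s)%N ->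
  ideal_eq
    (ideal_sum
       (ideal_colon (ideal_pow (@pathI K n t (n - 1)) s) (@upath K n t (n - t + 1)))
       (ideal_princ (@xv K n (n - t))))
    (ideal_sum (ideal_pow (@pathI K n t (n - t - 1)) s) (ideal_princ (@xv K n (n - t))))
  /\ ((n <= 2 * t)%N ->
      ideal_eq (@pathI K n t (n - t - 1)) (ideal_princ (0 : {mpoly K[n]})) /\
      ideal_eq
        (ideal_sum
           (ideal_colon (ideal_pow (@pathI K n t (n - 1)) s) (@upath K n t (n - t + 1)))
           (ideal_princ (@xv K n (n - t))))
        (ideal_princ (@xv K n (n - t)))).
Proof.
move=> Ht Hn Hs.
have [um [Eu Hum]] := @upathE K n t (n - t + 1) (ltac:(lia)) (ltac:(lia)).
have Hj : ((n - t).-1 < n)%N by lia.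
pose j0 := Ordinal Hj.
have Ex : @xv K n (n - t) = 'X_j0 by rewrite /xv (insubT (fun k => (k < n)%N) Hj).
have Humj : um j0 = 0%N.
  rewrite Hum /=; have -> : ((n - t + 1).-1 <= (n - t).-1)%N = false.
    by apply/negbTE; rewrite -ltnNge; lia.
  by [].
pose AJ := fun f : {mpoly K[n]} => exists2 i, (1 <= i <= (n - 1).+1 - t)%N & f = @upath K n t i.
pose AL := fun f : {mpoly K[n]} => exists2 i, (1 <= i <= (n - t - 1).+1 - t)%N & f = @upath K n t i.
have HPhi : forall g, AJ g -> (ideal_gen AL g /\ forall c, Phi j0 (c * g) = Phi j0 c * g)
                               \/ (forall c, Phi j0 (c * g) = 0).
  move=> g [i /andP [Hi1 Hi2] ->].
  have [w [Ew Hw]] := @upathE K n t i Hi1 (ltac:(lia)).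
  case: (leqP (i + t) (n - t)) => Hit.
    left; split.
      apply: genI; exists i => //; apply/andP; split => //; lia.
    move=> c; rewrite Ew; apply: Phi_comm; rewrite Hw /=.
    have -> : ((n - t).-1 < i.-1 + t)%N = false by apply/negbTE; rewrite -leqNgt; lia.
    by rewrite andbF.
  right => c; rewrite Ew; apply: Phi_kill; rewrite Hw /=.
  have h1 : (i.-1 <= (n - t).-1)%N by lia.
  have h2 : ((n - t).-1 < i.-1 + t)%N by lia.
  by rewrite h1 h2.
have HD : forall g, AL g -> (ideal_gen AL g /\ forall c, Dop um (c * g) = Dop um c * g)
                               \/ (forall c, Dop um (c * g) = 0).
  move=> g [i /andP [Hi1 Hi2] ->]; left; split; first by apply: genI; exists i => //; apply/andP.
  have [w [Ew Hw]] := @upathE K n t i Hi1 (ltac:(lia)).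
  move=> c; rewrite Ew; apply: Dop_comm => k; rewrite Hw Hum.
  case: (ltnP k (i.-1 + t)) => Hk; last by rewrite andbF orbT.
  have -> : ((n - t + 1).-1 <= k)%N = false by apply/negbTE; rewrite -ltnNge; lia.
  by [].
have P1 : ideal_eq
    (ideal_sum
       (ideal_colon (ideal_pow (@pathI K n t (n - 1)) s) (@upath K n t (n - t + 1)))
       (ideal_princ (@xv K n (n - t))))
    (ideal_sum (ideal_pow (@pathI K n t (n - t - 1)) s) (ideal_princ (@xv K n (n - t)))).
  move=> f; split.
    apply: gen_sub => a [Ha|Ha]; last first.
      apply: gen_sub Ha => b ->; apply: genI; right; exact: genI.
    have H1 := @pow_F _ (Phi j0) AJ AL (@Phi0 _ _ j0) (@PhiD _ _ j0) HPhi s _ Ha.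
    rewrite Eu Phi_comm // in H1.
    have H2 := @pow_F _ (Dop um) AL AL (@Dop0 _ _ um) (@DopD _ _ um) HD s _ H1.
    rewrite Dop_cancel in H2.
    rewrite -[a](subrK (Phi j0 a)); apply: genD; last by apply: genI; left.
    rewrite minus_Phi; apply: genM; apply: genI; right; rewrite Ex; exact: genI.
  apply: gen_sub => a [Ha|Ha]; apply: genI; [left | by right].
  rewrite /ideal_colon mulrC; apply: powM; apply: pow_mono Ha => g Hg.
  apply: gen_sub Hg => b [i /andP [h1 h2] ->]; apply: genI; exists i => //.
  apply/andP; split => //; lia.
split => // H2t.
have HL : forall f, @pathI K n t (n - t - 1) f -> f = 0.
  move=> f; apply: gen_zero => g [i /andP [h1 h2] _]; exfalso; lia.
split.
  move=> f; split => H.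
    by rewrite (HL f H); apply: gen0.
  have -> : f = 0 by apply: gen_zero H.
  exact: gen0.
move=> f; split => H.
  have := (P1 f).1 H; apply: gen_sub => a [Ha|//].
  move: Ha; clear P1 H; case: s Hs => [//|s'] _ /= Ha.
  rewrite (@gen_zero _ _ a _ Ha); first exact: gen0.
  by move=> b [c [d [_ Hd ->]]]; rewrite (HL d Hd) mulr0.
apply: (P1 f).2; apply: gen_sub H => b ->; apply: genI; right; exact: genI.
Qed.
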